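(* Let $\alpha,\beta\in(0,1/2)$ and $\epsilon\in(0,1/2)$. There exists a constant $c>0$ depending only on $\alpha,\beta,\epsilon$ such that the following holds for all positive integers $n$ and $N$. Suppose there exists a test which, given two independent samples $X^1$ and $X^2$, each of $N$ i.i.d. observations from unknown distributions $p\in\Delta_n$ and $q\in\Delta_n$ on $\Omega=\{1,\dots,n\}$ respectively, outputs $H_0$ or $H_1$, such that (1) for every distribution $p$, when $q=p$ the probability of outputting $H_1$ is at most $\alpha$; and (2) for all $p,q\in\Delta_n$ with $\|p-q\|_2\ge\epsilon\|p\|_2$, the probability of outputting $H_0$ is at most $\beta$. Then $N\ge c\sqrt n$.
   Context: $\Delta_n=\{r\in\mathbb{R}^n:r\ge0,\sum_ir_i=1\}$ is the set of probability distributions on $\{1,\dots,n\}$. *)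

(* Defs.v *)
From mathcomp Require Import all_boot all_order all_algebra.
From mathcomp Require Import reals.
Set Implicit Arguments. Unset Strict Implicit. Unset Printing Implicit Defensive.
Import Order.TTheory GRing.Theory Num.Theory.
Local Open Scope ring_scope.

(* Probability simplex Delta_n on Omega = 'I_n = {0,..,n-1} (~ {1..n}). *)
Definition is_distr (R : realType) (n : nat) (p : 'I_n -> R) : Prop :=
  (forall i, 0 <= p i) /\ \sum_(i < n) p i = 1.

Definition l2norm (R : realType) (n : nat) (p : 'I_n -> R) : R :=
  Num.sqrt (\sum_(i < n) p i ^+ 2).

Definition sample (N n : nat) := {ffun 'I_N -> 'I_n}.

Definition sample_prob (R : realType) (N n : nat) (p : 'I_n -> R)
  (x : sample N n) : R := \prod_(k < N) p (x k).

(* A (possibly randomized) test: phi x1 x2 in [0,1] is the probability of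
   outputting H1 on samples x1, x2.  Deterministic tests are the {0,1}-valued ones. *)
Definition is_test (R : realType) (N n : nat)
  (phi : sample N n -> sample N n -> R) : Prop :=
  forall x1 x2, 0 <= phi x1 x2 <= 1.

Definition prob_H1 (R : realType) (N n : nat)
  (phi : sample N n -> sample N n -> R) (p q : 'I_n -> R) : R :=
  \sum_(x1 : sample N n) \sum_(x2 : sample N n)
     sample_prob p x1 * sample_prob q x2 * phi x1 x2.

(* Main.v *)
Require Import Defs.
From mathcomp Require Import all_boot all_order all_algebra.
From mathcomp Require Import reals.
From mathcomp Require Import ring lra zify.
Import Order.TTheory GRing.Theory Num.Theory.
Local Open Scope ring_scope.

Set Implicit Arguments. Unset Strict Implicit. Unset Printing Implicit Defensive.


Lemma sum_sample_prob (R : realType) (N n : nat) (p : 'I_n -> R) :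
  \sum_(x : sample N n) sample_prob p x = (\sum_(j < n) p j) ^+ N.
Proof.
transitivity (\prod_(k < N) \sum_(j < n) p j); last by rewrite prodr_const card_ord.
by rewrite bigA_distr_bigA.

Qed.

Lemma sample_prob_ge0 (R : realType) (N n : nat) (p : 'I_n -> R) (x : sample N n) :
  (forall i, 0 <= p i) -> 0 <= sample_prob p x.
Proof. by move=> H; apply: prodr_ge0 => k _. Qed.

Lemma sum_ind_eq (R : realType) (T : finType) (a : T) (F : T -> R) :
  \sum_(j : T) ((j == a)%:R * F j) = F a.
Proof.
rewrite (bigD1 a) //= eqxx mul1r big1 ?addr0 // => j /negbTE.
by move=> ->; rewrite mul0r.
Qed.

Lemma prod_if1 (R : realType) (T : finType) (k : T) (a : T -> R) :
  \prod_(t : T) (if t == k then a t else 1) = a k.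
Proof.
rewrite (bigD1 k) //= eqxx big1 ?mulr1 // => t /negbTE -> //.
Qed.

Lemma marginal2 (R : realType) (N n : nat) (p : 'I_n -> R) (k l : 'I_N) j j' :
  \sum_(i < n) p i = 1 -> k != l ->
  \sum_(x : sample N n) sample_prob p x * (x k == j)%:R * (x l == j')%:R
  = p j * p j'.
Proof.
move=> Hp kl.
pose F := fun (t : 'I_N) (i : 'I_n) =>
  p i * (if t == k then (i == j)%:R else 1) * (if t == l then (i == j')%:R else 1).
transitivity (\sum_(x : {ffun 'I_N -> 'I_n}) \prod_t F t (x t)).
  apply: eq_bigr => x _; rewrite /F /sample_prob !big_split /=.
  rewrite (prod_if1 k (fun t => (x t == j)%:R)).
  by rewrite (prod_if1 l (fun t => (x t == j')%:R)).
rewrite -bigA_distr_bigA /=.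
transitivity (\prod_(t < N) ((if t == k then p j else 1) * (if t == l then p j' else 1))).
  apply: eq_bigr => t _; rewrite /F.
  case: (eqVneq t k) => [->|tk].
    rewrite (negbTE kl) mulr1; under eq_bigr do rewrite mulr1 mulrC.
    exact: sum_ind_eq.
  case: (eqVneq t l) => [_|tl].
    rewrite mul1r; under eq_bigr do rewrite mulr1 mulrC.
    exact: sum_ind_eq.
  rewrite mulr1; under eq_bigr do rewrite !mulr1.
  exact: Hp.
rewrite big_split /= (prod_if1 k (fun _ => p j)) (prod_if1 l (fun _ => p j')).
by [].
Qed.


Lemma sum_pairs (R : realType) (n m : nat) (F : nat -> R) :
  (2 * m <= n)%N ->
  \sum_(j < n) (if (j < 2 * m)%N then F j else 0) = \sum_(i < m) (F i + F (i + m)%N).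
Proof.
move=> H.
rewrite -(big_mkord xpredT (fun j => if (j < 2 * m)%N then F j else 0)).
rewrite (@big_cat_nat _ _ _ (2 * m) 0 n _ _ (leq0n _) H) /=.
have -> : \sum_(2 * m <= i < n) (if (i < 2 * m)%N then F i else 0) = 0.
  rewrite big_nat_cond big1 // => i /andP[/andP[h1 h2] _].
  by rewrite ltnNge h1.
rewrite addr0.
have -> : \sum_(0 <= i < 2 * m) (if (i < 2 * m)%N then F i else 0) = \sum_(0 <= i < 2 * m) F i.
  rewrite big_nat_cond [RHS]big_nat_cond.
  by apply: eq_bigr => i /andP[/andP[_ ->]].
have hm : (m <= 2 * m)%N by rewrite leq_pmull.
rewrite (@big_cat_nat _ _ _ m 0 (2 * m) _ _ (leq0n _) hm) /=.
rewrite -{2}(add0n m) big_addn.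
have -> : (2 * m - m = m)%N by rewrite mul2n -addnn addnK.
by rewrite !big_mkord big_split.
Qed.

Definition pu {R : realType} (n m : nat) : 'I_n -> R :=
  fun j => if (j < 2 * m)%N then ((2 * m)%:R)^-1 else 0.
Definition pr (n M : nat) (j : 'I_n) : 'I_M.+1 := Ordinal (ltn_pmod j (ltn0Sn M)).
Definition sd (n M : nat) (j : 'I_n) : bool := (M.+1 <= j)%N.
Definition qs {R : realType} (n M : nat) (s : {ffun 'I_M.+1 -> bool}) : 'I_n -> R :=
  fun j => if (j < 2 * M.+1)%N && (s (pr M j) == sd M j) then (M.+1%:R)^-1 else 0.

Lemma pu_distr (R : realType) (n m : nat) : (0 < m)%N -> (2 * m <= n)%N ->
  is_distr (@pu R n m).
Proof.
move=> m0 H; split.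
  by move=> i; rewrite /pu; case: ifP => // _; rewrite invr_ge0 ler0n.
rewrite /pu (sum_pairs (fun _ => ((2 * m)%:R)^-1 : R) H).
rewrite sumr_const card_ord -mulr2n -mulrnA -[_ *+ (2 * m)]mulr_natr mulVf //.
by rewrite pnatr_eq0 -lt0n muln_gt0 m0.
Qed.

Lemma qs_distr (R : realType) (n M : nat) (s : {ffun 'I_M.+1 -> bool}) :
  (2 * M.+1 <= n)%N -> is_distr (@qs R n M s).
Proof.
move=> H; split.
  by move=> i; rewrite /qs; case: ifP => // _; rewrite invr_ge0 ler0n.
pose F := fun j : nat => if s (inord (j %% M.+1)) == (M.+1 <= j)%N
   then (M.+1%:R)^-1 else 0 : R.
have -> : \sum_(j < n) @qs R n M s j = \sum_(j < n) (if (j < 2 * M.+1)%N then F j else 0).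
  apply: eq_bigr => j _; rewrite /qs /F.
  have -> : pr M j = inord (j %% M.+1).
    by apply: val_inj; rewrite /= inordK // ltn_pmod.
  by case: ((j < 2 * M.+1)%N).

rewrite (sum_pairs F H).
transitivity (\sum_(i < M.+1) (M.+1%:R)^-1 : R).
  apply: eq_bigr => i _; rewrite /F.
  rewrite modnDr modn_small // ltnNge -ltnS ltn_ord /= addnS ltnS leq_addl.
  by case: (s (inord i)); rewrite ?addr0 ?add0r.
by rewrite sumr_const card_ord -[_ *+ M.+1]mulr_natr mulVf // pnatr_eq0.
Qed.

Lemma far (R : realType) (n M : nat) (s : {ffun 'I_M.+1 -> bool}) (eps : R) :
  eps <= 1 ->
  l2norm (fun i => @pu R n M.+1 i - @qs R n M s i) >= eps * l2norm (@pu R n M.+1).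
Proof.
move=> he.
have -> : l2norm (fun i => @pu R n M.+1 i - @qs R n M s i) = l2norm (@pu R n M.+1).
  rewrite /l2norm; congr Num.sqrt; apply: eq_bigr => j _.
  rewrite /pu /qs; case: ifP => //= hj; last by rewrite subr0.
  case: ifP => _; last by rewrite subr0.
  have hx : (M.+1%:R : R) != 0 by rewrite pnatr_eq0.
  rewrite natrM.
  have -> : (2%:R * M.+1%:R)^-1 - M.+1%:R^-1 = - (2%:R * M.+1%:R : R)^-1.
    by field; rewrite -natr1 addrC in hx.
  by rewrite sqrrN.
rewrite -[X in _ <= X]mul1r; apply: ler_wpM2r => //.
exact: sqrtr_ge0.
Qed.


Definition bad (N n M : nat) (x : sample N n) : bool :=
  [exists k, exists l, (pr M (x k) == pr M (x l)) && (sd M (x k) != sd M (x l))].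

Lemma count_lb (R : realType) (N n M : nat) (x : sample N n) :
  ~~ bad M x ->
  (2 ^+ #|~: [set pr M (x k) | k in 'I_N]| : R) <=
  \sum_(s : {ffun 'I_M.+1 -> bool}) \prod_(k < N) (s (pr M (x k)) == sd M (x k))%:R.
Proof.
move=> nb.
set H := [set pr M (x k) | k in 'I_N].
have -> : \sum_(s : {ffun 'I_M.+1 -> bool}) \prod_(k < N) ((s (pr M (x k)) == sd M (x k))%:R : R)
  = (\prod_(i : 'I_M.+1) \sum_(b : bool)
    \prod_(k < N | pr M (x k) == i) ((b == sd M (x k))%:R : R)).
  rewrite bigA_distr_bigA /=; apply: eq_bigr => s _.
  rewrite (partition_big (fun k => pr M (x k)) predT) //=.
  apply: eq_bigr => i _; apply: eq_bigr => k /eqP <-; done.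
have nb' : forall k l, pr M (x k) = pr M (x l) -> sd M (x k) = sd M (x l).
  move=> k l e; case: (eqVneq (sd M (x k)) (sd M (x l))) => // ne; case/negP: nb.
  by apply/existsP; exists k; apply/existsP; exists l; rewrite e eqxx ne.
have -> : (2 ^+ #|~: H| : R) = \prod_(i : 'I_M.+1) (if i \in H then 1 else 2).
  rewrite (eq_bigr (fun i => if i \in ~: H then 2 else 1)); last first.
    by move=> i _; rewrite in_setC; case: (i \in H).
  by rewrite -big_mkcond prodr_const.
apply: ler_prod => i _; apply/andP; split; first by case: ifP.
case: (boolP (i \in H)) => hi.
  case/imsetP: hi => k0 _ ->.
  set F := fun b : bool => \prod_(k < N | pr M (x k) == pr M (x k0)) ((b == sd M (x k))%:R : R).
  have F0 : forall b, 0 <= F b by move=> b; apply: prodr_ge0 => k _; rewrite ler0n.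
  have F1 : F (sd M (x k0)) = 1.
    by apply: big1 => k /eqP e; rewrite (nb' _ _ e) eqxx.
  rewrite big_bool /=; have := F0 true; have := F0 false; rewrite -/(F true) -/(F false).
  by case: (sd M (x k0)) F1 => /= ->; lra.
rewrite big_bool /= !big1 // => k /eqP ek; case/negP: hi; apply/imsetP; exists k => //.
Qed.

Lemma weight (R : realType) (N n M : nat) (x : sample N n) :
  (2 * M.+1 <= n)%N -> sample_prob (@pu R n M.+1) x != 0 -> ~~ bad M x ->
  #|{ffun 'I_M.+1 -> bool}|%:R * sample_prob (@pu R n M.+1) x <=
  \sum_(s : {ffun 'I_M.+1 -> bool}) sample_prob (@qs R n M s) x.
Proof.
move=> Hn P0 nb.
have hx : forall k, (x k < 2 * M.+1)%N.
  move=> k; case: (ltnP (x k) (2 * M.+1)) => // hk; case/negP: P0.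
  by apply/prodf_eq0; exists k => //; rewrite /pu ltnNge hk.
have eP : sample_prob (@pu R n M.+1) x = ((2 * M.+1)%:R^-1)^+N.
  rewrite /sample_prob (eq_bigr (fun _ => (2 * M.+1)%:R^-1)) ?prodr_const ?card_ord //.
  by move=> k _; rewrite /pu hx.
have eQ : forall s, sample_prob (@qs R n M s) x =
    (M.+1%:R^-1)^+N * \prod_(k < N) ((s (pr M (x k)) == sd M (x k))%:R : R).
  move=> s; rewrite /sample_prob (eq_bigr (fun k => M.+1%:R^-1 * ((s (pr M (x k)) == sd M (x k))%:R : R))).
    by rewrite big_split /= prodr_const card_ord.
  by move=> k _; rewrite /qs hx /=; case: (_ == _); rewrite ?mulr1 ?mulr0.
rewrite eP; under eq_bigr do rewrite eQ.
rewrite -mulr_sumr.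
set u := #|~: [set pr M (x k) | k in 'I_N]|.
have Cu := count_lb R nb; rewrite -/u in Cu.
have hmu : (M.+1 <= N + u)%N.
  have h1 := leq_imset_card (fun k => pr M (x k)) 'I_N.
  have h2 := cardsC [set pr M (x k) | k in 'I_N].
  rewrite card_ord in h1 h2; rewrite -/u in h2.
  move: h1 h2 => h1; rewrite (card_ord M.+1) => <-. exact: (leq_add h1 (leqnn u)).
have h2u : (2 ^+ M.+1 : R) <= 2 ^+ N * 2 ^+ u.
  by rewrite -exprD ler_eXn2l // ltr1n.
rewrite card_ffun card_bool card_ord natrX natrM invfM exprMn.
set y := (M.+1%:R^-1 : R) ^+ N.
have y0 : 0 < y by rewrite exprn_gt0 // invr_gt0 ltr0n.
rewrite mulrA [_ * y]mulrC; apply: ler_wpM2l; first exact: ltW.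
apply: le_trans Cu.
have e1 : (2 ^+ N : R) * (2%:R^-1) ^+ N = 1.
  by rewrite -exprMn mulfV ?expr1n // pnatr_eq0.
have hN : 0 < (2%:R^-1 : R) ^+ N by rewrite exprn_gt0 // invr_gt0.
have := ler_wpM2r (ltW hN) h2u.
by rewrite mulrAC e1 mul1r.
Qed.


Lemma ind_exists (R : realType) (T : finType) (P : pred T) :
  ([exists a, P a]%:R : R) <= \sum_a (P a)%:R.
Proof.
case: (boolP [exists a, P a]) => [/existsP [a Pa]|_].
  rewrite (bigD1 a) //= Pa lerDl; apply: sumr_ge0 => i _; exact: ler0n.
by apply: sumr_ge0 => i _; exact: ler0n.
Qed.

Lemma ind_val (R : realType) (n v : nat) :
  \sum_(j < n) ((val j == v)%:R : R) <= 1.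
Proof.
case: (ltnP v n) => hv.
  rewrite (bigD1 (Ordinal hv)) //= eqxx big1 ?addr0 // => j hj.
  case: (eqVneq (val j) v) => // e; case/eqP: hj; exact: val_inj.
by rewrite big1 ?ler01 // => j _; case: (eqVneq (val j) v) => // e; move: (ltn_ord j); rewrite e ltnNge hv.
Qed.

Lemma uniq_partner (m j j' : nat) : (0 < m)%N -> (j' < 2 * m)%N ->
  (j' %% m = j %% m)%N -> (m <= j')%N != (m <= j)%N ->
  j' = (j %% m + (if (m <= j)%N then 0 else m))%N.
Proof.
move=> m0 hj' e ne.
move: ne; case: (leqP m j') => h1; case: (leqP m j) => h2 //= _.
  rewrite -e -{2}(subnK h1) modnDr modn_small ?subnK //; lia.
by rewrite addn0 -e modn_small.
Qed.

Definition cnd (n M : nat) (j j' : 'I_n) : bool :=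
  (pr M j == pr M j') && (sd M j != sd M j').

Lemma pair_bound (R : realType) (n M : nat) (j : 'I_n) :
  \sum_(j' < n) (cnd M j j')%:R * @pu R n M.+1 j' <= ((2 * M.+1)%:R)^-1.
Proof.
set c := ((2 * M.+1)%:R : R)^-1.
set v := (j %% M.+1 + (if (M.+1 <= j)%N then 0 else M.+1))%N.
have c0 : 0 <= c by rewrite invr_ge0 ler0n.
apply: (@le_trans _ _ (\sum_(j' < n) (val j' == v)%:R * c)).
  apply: ler_sum => j' _.
  rewrite /pu; case: (boolP (cnd M j j')) => hc; last by rewrite mul0r mulr_ge0 ?ler0n.
  case: ifP => hj'; last by rewrite mulr0 mulr_ge0 ?ler0n.
  move: hc => /andP [/eqP e ne].
  have e' : (j' %% M.+1 = j %% M.+1)%N by move: (congr1 val e) => /= ->.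
  have -> : val j' = v by apply: uniq_partner => //; rewrite eq_sym.
  by rewrite eqxx /= mul1r.
rewrite -mulr_suml -[X in _ <= X]mul1r; apply: ler_wpM2r => //.
exact: ind_val.
Qed.

Lemma pair_prob (R : realType) (N n M : nat) (k l : 'I_N) :
  (2 * M.+1 <= n)%N ->
  \sum_(x : sample N n) sample_prob (@pu R n M.+1) x * (cnd M (x k) (x l))%:R
   <= ((2 * M.+1)%:R)^-1.
Proof.
move=> Hn.
have [p0 p1] := pu_distr R (ltn0Sn M) Hn.
have c0 : 0 <= ((2 * M.+1)%:R : R)^-1 by rewrite invr_ge0 ler0n.
case: (eqVneq k l) => [<-|kl].
  by rewrite big1 // => x _; rewrite /cnd !eqxx /= mulr0.
set P := sample_prob (@pu R n M.+1).
have E : forall x : sample N n, P x * (cnd M (x k) (x l))%:R =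
   \sum_(j < n) \sum_(j' < n) (cnd M j j')%:R * (P x * (x k == j)%:R * (x l == j')%:R).
  move=> x; rewrite (bigD1 (x k)) //= [X in _ = _ + X]big1 ?addr0; last first.
    move=> j hj; apply: big1 => j' _.
    by rewrite eq_sym (negbTE hj) mulr0 mul0r mulr0.
  rewrite (bigD1 (x l)) //= [X in _ = _ + X]big1 ?addr0; last first.
    by move=> j' hj'; rewrite eq_sym (negbTE hj') !mulr0.
  by rewrite !eqxx !mulr1 mulrC.
rewrite (eq_bigr _ (fun x _ => E x)) exchange_big /=.
under eq_bigr do rewrite exchange_big /=.
under eq_bigr do under eq_bigr do rewrite -mulr_sumr (marginal2 _ _ p1 kl).
apply: (@le_trans _ _ (\sum_(j < n) @pu R n M.+1 j * ((2 * M.+1)%:R)^-1)).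
  apply: ler_sum => j _.
  under eq_bigr do rewrite mulrCA.
  rewrite -mulr_sumr; apply: ler_wpM2l => //.
  exact: pair_bound.
by rewrite -mulr_suml p1 mul1r.
Qed.

Lemma bad_bound (R : realType) (N n M : nat) :
  (2 * M.+1 <= n)%N ->
  \sum_(x : sample N n) sample_prob (@pu R n M.+1) x * (bad M x)%:R
   <= (N * N)%:R * ((2 * M.+1)%:R)^-1.
Proof.
move=> Hn.
have [p0 p1] := pu_distr R (ltn0Sn M) Hn.
apply: (@le_trans _ _ (\sum_(x : sample N n) \sum_(k < N) \sum_(l < N)
   sample_prob (@pu R n M.+1) x * (cnd M (x k) (x l))%:R)).
  apply: ler_sum => x _.
  under eq_bigr do rewrite -mulr_sumr.
  rewrite -mulr_sumr; apply: ler_wpM2l; first exact: sample_prob_ge0.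
  apply: le_trans (ind_exists _ (fun k => [exists l, cnd M (x k) (x l)])) _.
  apply: ler_sum => k _; exact: ind_exists.
rewrite exchange_big /=.
under eq_bigr do rewrite exchange_big /=.
apply: (@le_trans _ _ (\sum_(k < N) \sum_(l < N) ((2 * M.+1)%:R : R)^-1)).
  apply: ler_sum => k _; apply: ler_sum => l _; exact: pair_prob.
by rewrite !sumr_const !card_ord -mulrnA -[_ *+ (N * N)]mulr_natr mulrC.
Qed.


Lemma key (R : realType) (N n M : nat) (phi : sample N n -> sample N n -> R)
  (alpha beta : R) :
  (2 * M.+1 <= n)%N -> is_test phi ->
  prob_H1 phi (@pu R n M.+1) (@pu R n M.+1) <= alpha ->
  (forall s, 1 - prob_H1 phi (@pu R n M.+1) (@qs R n M s) <= beta) ->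
  1 - alpha - beta <= (N * N)%:R * ((2 * M.+1)%:R)^-1.
Proof.
move=> Hn Ht Ha Hb.
have [p0 p1] := pu_distr R (ltn0Sn M) Hn.
pose P := @sample_prob R N n (@pu R n M.+1).
pose f x2 := \sum_(x1 : sample N n) P x1 * phi x1 x2.
have hH : forall r, prob_H1 phi (@pu R n M.+1) r = \sum_(x2 : sample N n) sample_prob r x2 * f x2.
  move=> r; rewrite /prob_H1 exchange_big; apply: eq_bigr => x2 _.
  rewrite /f mulr_sumr; apply: eq_bigr => x1 _; rewrite /P; ring.
have SP : \sum_(x : sample N n) P x = 1 by rewrite /P sum_sample_prob p1 expr1n.
have SQ : forall s, \sum_(x : sample N n) sample_prob (@qs R n M s) x = 1.
  by move=> s; have [_ q1] := qs_distr R s Hn; rewrite sum_sample_prob q1 expr1n.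
have P0 : forall x, 0 <= P x by move=> x; apply: sample_prob_ge0.
have f01 : forall x2, 0 <= 1 - f x2 <= 1.
  move=> x2; have h0 : 0 <= f x2.
    by apply: sumr_ge0 => x1 _; apply: mulr_ge0 => //; case/andP: (Ht x1 x2).
  have h1 : f x2 <= 1.
    rewrite -SP; apply: ler_sum => x1 _; rewrite -[X in _ <= X]mulr1.
    by apply: ler_wpM2l => //; case/andP: (Ht x1 x2).
  by apply/andP; split; lra.
set K : R := #|{ffun 'I_M.+1 -> bool}|%:R.
have K0 : 0 < K by rewrite /K ltr0n card_ffun expn_gt0 card_bool.
pose W (x : sample N n) := \sum_(s : {ffun 'I_M.+1 -> bool}) sample_prob (@qs R n M s) x.
have W0 : forall x, 0 <= W x.
  move=> x; apply: sumr_ge0 => s _; apply: sample_prob_ge0.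
  by have [q0 _] := qs_distr R s Hn.
have HA : \sum_(x : sample N n) W x * (1 - f x) <= K * beta.
  rewrite /W; under eq_bigr do rewrite mulr_suml.
  rewrite exchange_big /=.
  apply: (@le_trans _ _ (\sum_(s : {ffun 'I_M.+1 -> bool}) beta)); last first.
    by rewrite sumr_const /K mulr_natl.
  apply: ler_sum => s _; apply: le_trans (Hb s).
  under eq_bigr do rewrite mulrBr mulr1.
  by rewrite sumrB SQ hH.
have HB : 1 - alpha <= \sum_(x : sample N n) P x * (1 - f x).
  under eq_bigr do rewrite mulrBr mulr1.
  rewrite sumrB SP; move: Ha; rewrite hH; lra.
have HC : forall x : sample N n, K * (P x * (1 - f x)) <= W x * (1 - f x) + K * (P x * (bad M x)%:R).
  move=> x; have /andP [hf0 hf1] := f01 x; have := P0 x; have := W0 x.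
  case: (boolP (bad M x)) => hb /= w0 px0.
    rewrite mulr1; have h1 : P x * (1 - f x) <= P x by rewrite -[X in _ <= X]mulr1 ler_wpM2l.
    have h2 := ler_wpM2l (ltW K0) h1; have h3 : 0 <= W x * (1 - f x) by rewrite mulr_ge0.
    lra.
  rewrite mulr0 mulr0 addr0.
  case: (eqVneq (P x) 0) => [->|Pn0]; first by rewrite mul0r mulr0 mulr_ge0.
  have hw : K * P x <= W x by apply: weight.
  nra.
have HD := @bad_bound R N n M Hn.
have HE : K * (\sum_(x : sample N n) P x * (1 - f x)) <=
   \sum_(x : sample N n) W x * (1 - f x) + K * \sum_(x : sample N n) P x * (bad M x)%:R.
  by rewrite !mulr_sumr -big_split; apply: ler_sum => x _; apply: HC.
move: HA HB HD HE.
set S1 := \sum_(x : sample N n) P x * (1 - f x).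
set S2 := \sum_(x : sample N n) W x * (1 - f x).
set S3 := \sum_(x : sample N n) P x * (bad M x)%:R.
set X := (N * N)%:R * ((2 * M.+1)%:R : R)^-1.
move=> HA HB HD HE.
rewrite -(ler_pM2l K0).
nra.
Qed.

Unset Implicit Arguments. Set Strict Implicit.

Theorem proposition3 (R : realType) (alpha beta eps : R) :
  0 < alpha < 1/2 -> 0 < beta < 1/2 -> 0 < eps < 1/2 ->
  exists c : R, 0 < c /\
    forall (n N : nat), (0 < n)%N -> (0 < N)%N ->
    forall phi : sample N n -> sample N n -> R,
      is_test phi ->
      (forall p : 'I_n -> R, is_distr p -> prob_H1 phi p p <= alpha) ->
      (forall p q : 'I_n -> R, is_distr p -> is_distr q ->
         l2norm (fun i => p i - q i) >= eps * l2norm p ->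
         1 - prob_H1 phi p q <= beta) ->
      N%:R >= c * Num.sqrt (n%:R).
Proof.
move=> /andP[a0 a1] /andP[b0 b1] /andP[e0 e1].
set g := (1 - alpha - beta) / 3.
have g0 : 0 < g by rewrite /g; lra.
exists (Num.sqrt g); split; first by rewrite sqrtr_gt0.
move=> n N n0 N0 phi Ht H0 H1.
have HN : (1 <= (N%:R : R)) by rewrite ler1n.
suff main : g * n%:R <= N%:R ^+ 2.
  rewrite -sqrtrM; last exact: ltW.
  rewrite -[X in _ <= X](@ger0_norm _ (N%:R)) ?ler0n // -sqrtr_sqr.
  exact: ler_wsqrtr.
case: (ltnP n 2) => hn.
  have -> : n = 1%N by lia.
  rewrite mulr1 /g; nra.
have [M [hM1 hM2]] : exists M, (2 * M.+1 <= n)%N /\ (n <= 3 * (2 * M.+1))%N.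
  by exists (n %/ 2).-1; split; lia.
have hk := @key R N n M phi alpha beta hM1 Ht.
have := hk (H0 _ (pu_distr R (ltn0Sn M) hM1)).
have e1' : eps <= 1 by lra.
move=> /(_ (fun s => H1 _ _ (pu_distr R (ltn0Sn M) hM1) (qs_distr R s hM1) (@far R n M s eps e1'))).
set m2 := ((2 * M.+1)%:R : R).
have m20 : 0 < m2 by rewrite /m2 ltr0n.
move=> hk'.
have := ler_wpM2r (ltW m20) hk'.
rewrite -mulrA mulVf ?mulr1; last by rewrite gt_eqF.
rewrite natrM => h.
have hn3 : (n%:R : R) <= 3 * m2.
  by rewrite /m2 -natrM ler_nat.
rewrite /g; nra.
Qed.
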